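(* Let $G$ be the final graph of the uncoordinated construction (described in the context) on a finite point set $P\subset\mathbb{R}^d$ with parameter $s>1$. Let $\mathcal{W}$ be the collection consisting of, for each edge $pq$ of $G$, the pair $(B_r(p),B_r(q))$ with $r=|pq|/(2s+2)$. Then $\mathcal{W}$ is an $s$-well-separated pair decomposition of $P$, and its size equals the number of edges of $G$.
   Context: Fix $d\ge 1$. Let $P\subset\mathbb{R}^d$ be a finite set of $n\ge 2$ points, $|xy|$ the Euclidean distance, $s>1$. For $p\in P$ and $r\ge0$, $B_r(p)=\{x\in P: |px|\le r\}$. Uncoordinated construction: start with the graph $G$ on vertex set $P$ with no edges. Every ordered pair $(p,q)$ of distinct points of $P$ is processed exactly once, in an arbitrary order, one at a time. When $(p,q)$ is processed, the edge $pq$ is added to $G$ unless $G$ currently contains an edge whose endpoints can be labeled $p',q'$ with $|pp'|\le |p'q'|/(2s+2)$ and $|qq'|\le |p'q'|/(2s+2)$. $G$ is the graph after all pairs are processed. For $A,B\subseteq P$: $\mathrm{diam}(A)=\max_{x,y\in A}|xy|$, $d(A,B)=\min_{x\in A,y\in B}|xy|$; $(A,B)$ is $s$-separated if $d(A,B)\ge s\cdot\max(\mathrm{diam}(A),\mathrm{diam}(B))$. An $s$-well-separated pair decomposition ($s$-WSPD) of $P$ is a collection of pairs $\{(A_i,B_i)\}_{i=1}^m$ with $A_i,B_i\subseteq P$, each pair $s$-separated, such that for any two points $p,q\in P$ there is some $i$ with $p\in A_i$ and $q\in B_i$; $m$ is its size. *)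

(* Defs.v *)
From HB Require Import structures.
From mathcomp Require Import all_boot all_order all_algebra.
From mathcomp Require Import reals.
Set Implicit Arguments. Unset Strict Implicit. Unset Printing Implicit Defensive.
Import Order.TTheory GRing.Theory Num.Theory.
Local Open Scope ring_scope.

Section WSPD.
Variables (R : realType) (d n : nat).
(* The point set P is {pt i | i : 'I_n}, with pt injective. *)
Variable pt : 'I_n -> 'rV[R]_d.

Definition edist (x y : 'rV[R]_d) : R :=
  Num.sqrt (\sum_(k < d) (x ord0 k - y ord0 k) ^+ 2).

Definition pdist (i j : 'I_n) : R := edist (pt i) (pt j).

Definition ball (r : R) (p : 'I_n) : {set 'I_n} :=
  [set x | pdist p x <= r].

Definition diam (A : {set 'I_n}) : R :=
  \big[Num.max/0]_(x in A) \big[Num.max/0]_(y in A) pdist x y.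

(* d(A,B) = min_{x in A, y in B} |xy|.  The neutral element diam(P) is
   >= every distance, so for nonempty A, B this is exactly the minimum. *)
Definition setdist (A B : {set 'I_n}) : R :=
  \big[Num.min/diam setT]_(x in A) \big[Num.min/diam setT]_(y in B) pdist x y.

Definition s_separated (s : R) (A B : {set 'I_n}) : Prop :=
  setdist A B >= s * Num.max (diam A) (diam B).

(* s-WSPD: every pair s-separated, every two distinct points separated by
   some pair (in either order: pairs are unordered). *)
Definition is_wspd (s : R) (W : {set {set 'I_n} * {set 'I_n}}) : Prop :=
  (forall AB, AB \in W -> s_separated s AB.1 AB.2) /\
  (forall p q : 'I_n, p != q -> exists2 AB, AB \in W &
      (p \in AB.1 /\ q \in AB.2) \/ (q \in AB.1 /\ p \in AB.2)).

(* Graphs: set of (unordered) edges, each edge a 2-element set {p, q}. *)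
Definition blocked (s : R) (E : {set {set 'I_n}}) (p q : 'I_n) : bool :=
  [exists p' : 'I_n, exists q' : 'I_n,
     [&& [set p'; q'] \in E,
         pdist p p' <= pdist p' q' / (2 * s + 2) &
         pdist q q' <= pdist p' q' / (2 * s + 2)]].

Definition step (s : R) (E : {set {set 'I_n}}) (pq : 'I_n * 'I_n)
  : {set {set 'I_n}} :=
  if blocked s E pq.1 pq.2 then E else [set pq.1; pq.2] |: E.

Definition uncoord_graph (s : R) (ord : seq ('I_n * 'I_n)) : {set {set 'I_n}} :=
  foldl (step s) set0 ord.

Definition valid_order (ord : seq ('I_n * 'I_n)) : Prop :=
  uniq ord /\ (forall pq : 'I_n * 'I_n, (pq \in ord) = (pq.1 != pq.2)).

(* The collection W: for each edge pq (oriented by index, p < q) the pair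
   (B_r(p), B_r(q)) with r = |pq|/(2s+2). *)
Definition edge_wspd (s : R) (E : {set {set 'I_n}})
  : {set {set 'I_n} * {set 'I_n}} :=
  [set (ball (pdist pq.1 pq.2 / (2 * s + 2)) pq.1,
        ball (pdist pq.1 pq.2 / (2 * s + 2)) pq.2)
   | pq in [set pq : 'I_n * 'I_n | (pq.1 < pq.2)%N && ([set pq.1; pq.2] \in E)]].

End WSPD.

(* Main.v *)
Require Import Defs.
From HB Require Import structures.
From mathcomp Require Import all_boot all_order all_algebra.
From mathcomp Require Import reals.
From mathcomp Require Import ring lra zify.
Import Order.TTheory GRing.Theory Num.Theory.
Local Open Scope ring_scope.
Set Implicit Arguments. Unset Strict Implicit.

Lemma cs_ineq (R : realType) (d : nat) (a b : 'I_d -> R) :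
  (\sum_i a i * b i) ^+ 2 <= (\sum_i a i ^+ 2) * (\sum_i b i ^+ 2).
Proof.
set A := \sum_i a i ^+ 2; set B := \sum_i b i ^+ 2; set C := \sum_i a i * b i.
have B0 : 0 <= B by apply: sumr_ge0 => i _; apply: sqr_ge0.
have H : 0 <= \sum_i (B * a i - C * b i) ^+ 2 by apply: sumr_ge0 => i _; apply: sqr_ge0.
have E : \sum_i (B * a i - C * b i) ^+ 2 = B ^+ 2 * A - (2 * B * C) * C + C ^+ 2 * B.
  rewrite (eq_bigr (fun i => B ^+ 2 * a i ^+ 2 - (2 * B * C) * (a i * b i) + C ^+ 2 * b i ^+ 2)); last by move=> i _; ring.
  by rewrite big_split sumrB /= -!mulr_sumr.
rewrite E in H.
have [Bz|Bp] := eqVneq B 0.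
  have bz : forall i, b i = 0.
    move=> i; apply/eqP; rewrite -sqrf_eq0; apply/eqP.
    by move/eqP: Bz; rewrite /B psumr_eq0 => [/allP/(_ i (mem_index_enum _))/implyP/(_ isT)/eqP|j _]; [|apply: sqr_ge0].
  have Cz : C = 0 by rewrite /C big1 // => i _; rewrite bz mulr0.
  by rewrite Cz Bz expr0n /= mulr0.
have Bpos : 0 < B by rewrite lt0r Bp.
nra.
Qed.

Lemma edist_sym (R : realType) (d : nat) (x y : 'rV[R]_d) : edist x y = edist y x.
Proof. rewrite /edist; congr Num.sqrt; apply: eq_bigr => i _; ring. Qed.

Lemma edist_ge0 (R : realType) (d : nat) (x y : 'rV[R]_d) : 0 <= edist x y.
Proof. exact: sqrtr_ge0. Qed.

Lemma edist_xx (R : realType) (d : nat) (x : 'rV[R]_d) : edist x x = 0.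
Proof. rewrite /edist big1 ?sqrtr0 // => i _; by rewrite subrr expr2 mulr0. Qed.

Lemma edist_tri (R : realType) (d : nat) (x y z : 'rV[R]_d) :
  edist x z <= edist x y + edist y z.
Proof.
rewrite /edist.
set a := fun i : 'I_d => x ord0 i - y ord0 i.
set b := fun i : 'I_d => y ord0 i - z ord0 i.
have -> : \sum_(k < d) (x ord0 k - z ord0 k) ^+ 2 =
   \sum_k a k ^+ 2 + 2 * \sum_k a k * b k + \sum_k b k ^+ 2.
  rewrite mulr_sumr -!big_split /=; apply: eq_bigr => i _; rewrite /a /b; ring.
have -> : \sum_(k < d) (x ord0 k - y ord0 k) ^+ 2 = \sum_k a k ^+ 2 by [].
have -> : \sum_(k < d) (y ord0 k - z ord0 k) ^+ 2 = \sum_k b k ^+ 2 by [].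
set A := \sum_k a k ^+ 2; set B := \sum_k b k ^+ 2; set C := \sum_k a k * b k.
have A0 : 0 <= A by apply: sumr_ge0 => i _; apply: sqr_ge0.
have B0 : 0 <= B by apply: sumr_ge0 => i _; apply: sqr_ge0.
have hC : C <= Num.sqrt A * Num.sqrt B.
  rewrite -sqrtrM //; apply: le_trans (real_ler_norm _) _; first exact: num_real.
  rewrite -sqrtr_sqr; apply: ler_wsqrtr; exact: cs_ineq.
have sA := sqrtr_ge0 A; have sB := sqrtr_ge0 B.
rewrite -[_ + _ in X in _ <= X]ger0_norm ?addr_ge0 // -sqrtr_sqr.
apply: ler_wsqrtr.
have eA := sqr_sqrtr A0; have eB := sqr_sqrtr B0.
nra.
Qed.
Lemma set2_facts (n : nat) (a b c e : 'I_n) : [set a; b] = [set c; e] ->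
  [/\ (val a == val c) || (val a == val e), (val b == val c) || (val b == val e),
      (val c == val a) || (val c == val b) & (val e == val a) || (val e == val b)].
Proof.
move=> /setP H.
have Ha := H a; have Hb := H b; have Hc := H c; have He := H e.
rewrite !inE !eqxx /= ?orbT in Ha Hb Hc He.
by rewrite !val_eqE -Ha -Hb Hc He.
Qed.

Lemma set2_ord (n : nat) (a b c e : 'I_n) : (a < b)%N -> (c < e)%N ->
  [set a; b] = [set c; e] -> a = c /\ b = e.
Proof.
move=> ab ce /set2_facts [Ha Hb Hc He].
have ab' : (val a < val b)%N := ab. have ce' : (val c < val e)%N := ce.
split; apply/val_inj; lia.
Qed.

Lemma set2_eq (n : nat) (a b c e : 'I_n) :
  [set a; b] = [set c; e] -> (a = c /\ b = e) \/ (a = e /\ b = c).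
Proof.
move=> /set2_facts [Ha Hb Hc He].
have : ((val a == val c) && (val b == val e)) || ((val a == val e) && (val b == val c)) by lia.
by case/orP=> /andP[/eqP/val_inj -> /eqP/val_inj ->]; [left|right].
Qed.

Definition blk (R : realType) (dim n : nat) (pt : 'I_n -> 'rV[R]_dim) (s : R)
  (E : {set {set 'I_n}}) (p q : 'I_n) : Prop :=
  exists c e, [/\ [set c; e] \in E, pdist pt p c <= pdist pt c e / (2 * s + 2)
                & pdist pt q e <= pdist pt c e / (2 * s + 2)].

Definition CC (R : realType) (dim n : nat) (pt : 'I_n -> 'rV[R]_dim) (s : R)
  (a b c e : 'I_n) : Prop :=
  [/\ pdist pt a c <= pdist pt c e / (2 * s + 2), pdist pt b e <= pdist pt c e / (2 * s + 2),
      pdist pt a c <= pdist pt a b / (2 * s + 2) & pdist pt b e <= pdist pt a b / (2 * s + 2)].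

Definition Inv1 (n : nat) (E : {set {set 'I_n}}) : Prop :=
  forall x, x \in E -> exists a b : 'I_n, (a < b)%N /\ x = [set a; b].

Definition Inv2 (R : realType) (dim n : nat) (pt : 'I_n -> 'rV[R]_dim) (s : R)
  (E : {set {set 'I_n}}) : Prop :=
  forall a b c e, [set a; b] \in E -> [set c; e] \in E -> [set a; b] != [set c; e] ->
    ~ CC pt s a b c e.

Lemma pdist_sym (R : realType) (dim n : nat) (pt : 'I_n -> 'rV[R]_dim) a b :
  pdist pt a b = pdist pt b a.
Proof. exact: edist_sym. Qed.

Lemma pdist_xx (R : realType) (dim n : nat) (pt : 'I_n -> 'rV[R]_dim) a :
  pdist pt a a = 0.
Proof. exact: edist_xx. Qed.

Lemma pdist_ge0 (R : realType) (dim n : nat) (pt : 'I_n -> 'rV[R]_dim) a b :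
  0 <= pdist pt a b.
Proof. exact: edist_ge0. Qed.

Lemma pdist_tri (R : realType) (dim n : nat) (pt : 'I_n -> 'rV[R]_dim) a b c :
  pdist pt a c <= pdist pt a b + pdist pt b c.
Proof. exact: edist_tri. Qed.

Lemma blockedP (R : realType) (dim n : nat) (pt : 'I_n -> 'rV[R]_dim) (s : R) E p q :
  blocked pt s E p q <-> blk pt s E p q.
Proof.
split.
  by move=> /existsP[c /existsP[e /and3P[h1 h2 h3]]]; exists c, e.
by move=> [c [e [h1 h2 h3]]]; apply/existsP; exists c; apply/existsP; exists e; apply/and3P.
Qed.

Lemma blk_sym (R : realType) (dim n : nat) (pt : 'I_n -> 'rV[R]_dim) (s : R) E p q :
  blk pt s E p q -> blk pt s E q p.
Proof.
move=> [c [e [h1 h2 h3]]]; exists e, c; split.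
- by rewrite setUC.
- by rewrite [pdist _ e c]pdist_sym.
- by rewrite [pdist _ e c]pdist_sym.
Qed.

Lemma blk_mono (R : realType) (dim n : nat) (pt : 'I_n -> 'rV[R]_dim) (s : R) (E F : {set {set 'I_n}}) p q :
  E \subset F -> blk pt s E p q -> blk pt s F p q.
Proof. by move=> /subsetP sEF [c [e [h1 h2 h3]]]; exists c, e; split => //; apply: sEF. Qed.

Lemma CC_sym (R : realType) (dim n : nat) (pt : 'I_n -> 'rV[R]_dim) (s : R) a b c e :
  CC pt s a b c e -> CC pt s c e a b.
Proof.
by move=> [h1 h2 h3 h4]; split; rewrite pdist_sym.
Qed.

Lemma step_props (R : realType) (dim n : nat) (pt : 'I_n -> 'rV[R]_dim) (s : R)
  (E : {set {set 'I_n}}) (pq : 'I_n * 'I_n) :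
  0 < s -> pq.1 != pq.2 -> Inv1 E -> Inv2 pt s E ->
  let F := step pt s E pq in
  [/\ Inv1 F, Inv2 pt s F, E \subset F & blk pt s F pq.1 pq.2].
Proof.
move=> s0; case: pq => p q /= pq I1 I2.
rewrite /step /=.
case: ifPn => [/blockedP bl | nbl].
  by split.
have nb : ~ blk pt s E p q by move=> /blockedP; apply/negP.
split.
- move=> x; rewrite !inE => /orP[/eqP -> | /I1 //].
  case: (ltngtP p q) => [h|h|h].
  + by exists p, q.
  + by exists q, p; rewrite setUC.
  + by move: pq; rewrite (val_inj h) eqxx.
- have key : forall a b c e, [set a; b] = [set p; q] -> [set c; e] \in E ->
      ~ CC pt s a b c e.
    move=> a b c e /set2_eq [[-> ->]|[-> ->]] ce [h1 h2 h3 h4].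
      by apply: nb; exists c, e.
    by apply: nb; apply: blk_sym; exists c, e.
  move=> a b c e; rewrite !inE => /orP[/eqP ab | ab] /orP[/eqP ce | ce] ne.
  + by move: ne; rewrite ab ce eqxx.
  + exact: key.
  + by move=> /CC_sym; apply: key.
  + exact: I2.
- exact: subsetUr.
- exists p, q; split.
  + by rewrite setU11.
  + rewrite pdist_xx; apply: divr_ge0; [exact: pdist_ge0 | lra].
  + rewrite pdist_xx; apply: divr_ge0; [exact: pdist_ge0 | lra].
Qed.

Lemma fold_props (R : realType) (dim n : nat) (pt : 'I_n -> 'rV[R]_dim) (s : R)
  (ord : seq ('I_n * 'I_n)) (E : {set {set 'I_n}}) :
  0 < s -> (forall pq, pq \in ord -> pq.1 != pq.2) -> Inv1 E -> Inv2 pt s E ->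
  let F := foldl (step pt s) E ord in
  [/\ Inv1 F, Inv2 pt s F, E \subset F & forall pq, pq \in ord -> blk pt s F pq.1 pq.2].
Proof.
move=> s0; elim: ord E => [|x l IH] E /= hd I1 I2.
  by split => //.
have [J1 J2 sub bx] := step_props s0 (hd x (mem_head _ _)) I1 I2.
have hl : forall pq, pq \in l -> pq.1 != pq.2 by move=> pq h; apply: hd; rewrite inE h orbT.
have [K1 K2 sub2 bl] := IH _ hl J1 J2.
split => //.
- exact: subset_trans sub sub2.
- move=> pq; rewrite inE => /orP[/eqP -> | h]; last exact: bl.
  exact: blk_mono bx.
Qed.

Lemma sep_lemma (R : realType) (dim n : nat) (pt : 'I_n -> 'rV[R]_dim) (s : R) (a b : 'I_n) :
  1 < s -> s_separated pt s (ball pt (pdist pt a b / (2 * s + 2)) a)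
                             (ball pt (pdist pt a b / (2 * s + 2)) b).
Proof.
move=> s1.
set r := pdist pt a b / (2 * s + 2).
have k0 : 0 < 2 * s + 2 by lra.
have hab : pdist pt a b = (2 * s + 2) * r by rewrite /r mulrC divfK // gt_eqF.
have r0 : 0 <= r by apply: divr_ge0; [exact: pdist_ge0 | lra].
have dB : forall c, diam pt (ball pt r c) <= 2 * r.
  move=> c; apply: bigmax_le; first lra.
  move=> x; rewrite inE => hx; apply: bigmax_le; first lra.
  move=> y; rewrite inE => hy.
  have := pdist_tri pt x c y; rewrite [pdist _ x c]pdist_sym; lra.
rewrite /s_separated.
have -> : s * Num.max (diam pt (ball pt r a)) (diam pt (ball pt r b)) <= setdist pt (ball pt r a) (ball pt r b)
  = true; last by [].
apply: (@le_trans _ _ (2 * s * r)).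
  have := dB a; have := dB b.
  case: (leP (diam pt (ball pt r a)) (diam pt (ball pt r b))) => _; nra.
have hT : pdist pt a b <= diam pt [set: 'I_n].
  by apply: (bigmax_sup a); rewrite ?inE //; apply: (bigmax_sup b); rewrite ?inE.
apply: le_bigmin; first lra.
move=> x; rewrite inE => hx; apply: le_bigmin; first lra.
move=> y; rewrite inE => hy.
have := pdist_tri pt a x b; have := pdist_tri pt x y b.
rewrite [pdist _ y b]pdist_sym; lra.
Qed.

Unset Implicit Arguments.

Theorem theorem4 (R : realType) (d n : nat) (pt : 'I_n -> 'rV[R]_d) (s : R)
  (ord : seq ('I_n * 'I_n)) :
  (1 <= d)%N -> (2 <= n)%N -> injective pt -> 1 < s ->
  valid_order ord ->
  let G := uncoord_graph pt s ord in
  is_wspd pt s (edge_wspd pt s G) /\ #|edge_wspd pt s G| = #|G|.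
Proof.
move=> _ _ _ s1 [_ hord] G.
have s0 : 0 < s by lra.
have hd : forall pq, pq \in ord -> pq.1 != pq.2 by move=> pq; rewrite hord.
have I10 : Inv1 (set0 : {set {set 'I_n}}) by move=> x; rewrite inE.
have I20 : Inv2 pt s set0 by move=> a b c e; rewrite inE.
have [I1 I2 _ cov] := fold_props s0 hd I10 I20.
rewrite -/(uncoord_graph pt s ord) -/G in I1 I2 cov.
have rge0 : forall a b, 0 <= pdist pt a b / (2 * s + 2).
  by move=> a b; apply: divr_ge0; [exact: pdist_ge0 | lra].
split; [split|].
- by move=> AB /imsetP[[a b] _ ->]; exact: sep_lemma.
- move=> p q pq.
  have hpq : (p, q) \in ord by rewrite hord.
  have [c [e [ce hp hq]]] := cov (p, q) hpq.
  have nce : c != e.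
    apply/eqP => cee; subst e.
    have [a [b [ab h]]] := I1 _ ce.
    have [Ha Hb _ _] := set2_facts (esym h).
    have ab' : (val a < val b)%N := ab. lia.
  case: (ltngtP c e) => h.
  + exists (ball pt (pdist pt c e / (2 * s + 2)) c, ball pt (pdist pt c e / (2 * s + 2)) e).
      by apply/imsetP; exists (c, e) => //; rewrite inE /= h ce.
    by left; split; rewrite inE /= pdist_sym.
  + exists (ball pt (pdist pt e c / (2 * s + 2)) e, ball pt (pdist pt e c / (2 * s + 2)) c).
      by apply/imsetP; exists (e, c) => //; rewrite inE /= h setUC ce.
    by right; split; rewrite inE /= pdist_sym [pdist _ e c]pdist_sym.
  + by move: nce; rewrite (val_inj h) eqxx.
- rewrite /edge_wspd card_in_imset.
    set Dom := [set pq : 'I_n * 'I_n | _].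
    have eG : (fun pq : 'I_n * 'I_n => [set pq.1; pq.2]) @: Dom = G.
      apply/setP => x; apply/imsetP/idP.
        by move=> [[a b]]; rewrite inE /= => /andP[_ h] ->.
      move=> xG; have [a [b [ab ex]]] := I1 _ xG.
      by exists (a, b) => //; rewrite inE /= ab -ex xG.
    rewrite -[in RHS]eG card_in_imset //.
    move=> [a b] [c e]; rewrite !inE /= => /andP[ab _] /andP[ce _] /= h.
    by have [-> ->] := set2_ord ab ce h.
  move=> [a b] [c e]; rewrite !inE /= => /andP[ab abG] /andP[ce ceG] [h1 h2].
  case: (eqVneq [set a; b] [set c; e]) => [/(set2_ord ab ce) [-> ->] // | ne].
  exfalso; apply: (I2 a b c e abG ceG ne).
  have m1 : c \in ball pt (pdist pt a b / (2 * s + 2)) a by rewrite h1 inE pdist_xx.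
  have m2 : a \in ball pt (pdist pt c e / (2 * s + 2)) c by rewrite -h1 inE pdist_xx.
  have m3 : e \in ball pt (pdist pt a b / (2 * s + 2)) b by rewrite h2 inE pdist_xx.
  have m4 : b \in ball pt (pdist pt c e / (2 * s + 2)) e by rewrite -h2 inE pdist_xx.
  rewrite !inE in m1 m2 m3 m4.
  by split => //; rewrite pdist_sym.
Qed.
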